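(* Let $p$ be a prime, $k$ a commutative ring of characteristic $p$, $n\in\mathbb{N}$, and $x\in W\Omega_{k[X_1,\ldots,X_n]/k}$. There exists $\varepsilon>0$ with $\gamma_\varepsilon(x)\neq-\infty$ if and only if there exists $\varepsilon'>0$ with $\zeta_{\varepsilon'}(x)\neq-\infty$.
   Context: $W\Omega=W\Omega_{k[\underline{X}]/k}$ is the (Langer–Zink) de Rham–Witt complex of $k[\underline X]=k[X_1,\ldots,X_n]$ over $k$, with $d$, $F$, $V$ and Teichmüller map $[\cdot]$. A weight function is a map $a\colon\{1,\ldots,n\}\to\mathbb{N}[1/p]$; $|a|=\sum_i a_i$; $\mathrm{Supp}(a)=\{i: a_i\neq0\}$; $a|_J$ equals $a$ on $J$ and $0$ elsewhere; $\mathrm{val}_p(a)=\min_{i\in\mathrm{Supp}(a)}\mathrm{val}_p(a_i)$, $u(a)=\max\{0,-\mathrm{val}_p(a)\}$ ($u(0)=0$). A partition of $a$ is a subset $I\subseteq\mathrm{Supp}(a)$; $\mathcal P$ is the set of pairs $(a,I)$. Order $\mathrm{Supp}(a)$ by $i\preceq i'$ iff $\mathrm{val}_p(a_i)<\mathrm{val}_p(a_{i'})$, or equality and $i\leqslant i'$. For $I=\{i_1\prec\cdots\prec i_m\}$: $I_0=\{i: i\prec i_1\}$ ($=\mathrm{Supp}(a)$ if $m=0$), $I_l=\{i: i_l\preceq i\prec i_{l+1}\}$ ($1\leqslant l<m$), $I_m=\{i: i_m\preceq i\}$. For $a\neq0$, $g(a)=F^{u(a)+\mathrm{val}_p(a)}d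 V^{u(a)}[\underline X^{p^{-\mathrm{val}_p(a)}a}]$ with $\underline X^c=\prod X_i^{c_i}$. For $\eta\in W(k)$: $e(\eta,a,I)=dV^{u(a)}(\eta[\underline X^{p^{u(a)}a|_{I_1}}])\prod_{l=2}^m g(a|_{I_l})$ if $I_0=\emptyset$ and $u(a)\neq0$, else $e(\eta,a,I)=V^{u(a)}(\eta[\underline X^{p^{u(a)}a|_{I_0}}])\prod_{l=1}^m g(a|_{I_l})$. Every $x$ is uniquely a convergent sum $\sum_{(a,I)\in\mathcal P}e(\eta_{a,I},a,I)$, $\eta_{a,I}\in W(k)$. $\mathrm{val}_V(\eta)=\sup\{m:\eta\in V^m(W(k))\}$ ($+\infty$ for $\eta=0$). For $\varepsilon>0$: $\gamma_\varepsilon(x)=\inf_{(a,I)}\big(\mathrm{val}_V(\eta_{a,I})+u(a)-\varepsilon|a|\big)$ and $\zeta_\varepsilon(x)=\inf_{(a,I)}\big(2n\,\mathrm{val}_V(\eta_{a,I})+c(a,I)u(a)-\varepsilon|a|\big)$, where $c(a,I)=\#I$ if $I_0=\emptyset$ and $\#I+1$ otherwise (empty infima are $+\infty$). *)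

(* Defs.v *)
From HB Require Import structures.
From mathcomp Require Import all_boot all_order all_algebra.
From mathcomp Require Import classical_sets reals constructive_ereal ereal.
Set Implicit Arguments.
Unset Strict Implicit.
Unset Printing Implicit Defensive.
Import Order.TTheory GRing.Theory Num.Theory.
Local Open Scope ring_scope.

Definition valp (p : nat) (q : rat) : int :=
  (logn p `|numq q|%N)%:Z - (logn p `|denq q|%N)%:Z.

(* Variables X_1..X_n are indexed by 'I_n (i.e. i-1 for X_i). *)
Definition weightT (n : nat) := {ffun 'I_n -> rat}.

(* a : {1..n} -> N[1/p] *)
Definition is_weight (p n : nat) (a : weightT n) : Prop :=
  forall i, exists m N : nat, (p ^ m)%:R * a i = N%:R.

Definition supp (n : nat) (a : weightT n) : {set 'I_n} := [set i | a i != 0].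

Definition wnorm (n : nat) (a : weightT n) : rat := \sum_(i < n) a i.

(* u(a) = max(0, - val_p(a)) with val_p(a) = min_{i in Supp a} val_p(a_i);
   equivalently max over i in Supp a of max(0, -val_p(a_i)); u(0) = 0. *)
Definition u_of (p n : nat) (a : weightT n) : nat :=
  \max_(i in supp a) `|Num.max 0%R (- valp p (a i))|%N.

Definition prec_eq (p n : nat) (a : weightT n) (i i' : 'I_n) : bool :=
  (valp p (a i) < valp p (a i'))%R ||
  ((valp p (a i) == valp p (a i')) && (i <= i')%N).

(* I_0 = { i in Supp a : i strictly precedes i_1 = min I } (= Supp a if I = ∅) *)
Definition I0 (p n : nat) (a : weightT n) (I : {set 'I_n}) : {set 'I_n} :=
  [set i in supp a | [forall j in I, prec_eq p a i j && (i != j)]].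

Definition is_partition (p n : nat) (a : weightT n) (I : {set 'I_n}) : Prop :=
  is_weight p a /\ I \subset supp a.

Definition c_of (p n : nat) (a : weightT n) (I : {set 'I_n}) : nat :=
  if I0 p a I == finset.set0 then #|I| else #|I|.+1.

(* An element of W(k) is given by its Witt components (eta_0, eta_1, ...);
   V(eta_0, eta_1, ...) = (0, eta_0, eta_1, ...), so V^m W(k) is the set of
   Witt vectors whose first m components vanish. *)
Definition witt (k : Type) := nat -> k.

Definition inVm (k : nzRingType) (m : nat) (eta : witt k) : Prop :=
  forall j, (j < m)%N -> eta j = 0.

Definition valV (R : realType) (k : nzRingType) (eta : witt k) : \bar R :=
  ereal_sup [set ((m%:R : R)%:E) | m in [set m : nat | inVm m eta]].

(* By Langer--Zink, x in W Omega_{k[X]/k} is uniquely a convergent sum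
   sum_{(a,I) in P} e(eta_{a,I}, a, I); we represent x by its coefficient
   family (values outside P are irrelevant).  Convergence (in the V-adic
   topology) means: for every m, e(eta_{a,I},a,I) lies in Fil^m, i.e.
   eta_{a,I} in V^{m - u(a)} W(k), for all but finitely many (a, I). *)
Definition coeff_family (p : nat) (k : nzRingType) (n : nat) :=
  weightT n -> {set 'I_n} -> witt k.

Definition convergent (p : nat) (k : nzRingType) (n : nat)
    (eta : coeff_family p k n) : Prop :=
  forall m : nat, exists s : seq (weightT n * {set 'I_n}),
    forall a I, is_partition p a I -> (a, I) \notin s ->
      inVm (m - u_of p a) (eta a I).

Definition WOmega (p : nat) (k : nzRingType) (n : nat) :=
  {eta : coeff_family p k n | convergent eta}.

Definition coeffs (p : nat) (k : nzRingType) (n : nat) (x : WOmega p k n) :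
  coeff_family p k n := proj1_sig x.

Local Open Scope ereal_scope.

Definition gamma_eps (R : realType) (p : nat) (k : nzRingType) (n : nat)
    (eps : R) (x : WOmega p k n) : \bar R :=
  ereal_inf [set v | exists a I, is_partition p a I /\
                 valV R (coeffs x a I) + ((u_of p a)%:R : R)%:E
                 - (eps * ratr (wnorm a))%:E
 = v].

Definition zeta_eps (R : realType) (p : nat) (k : nzRingType) (n : nat)
    (eps : R) (x : WOmega p k n) : \bar R :=
  ereal_inf [set v | exists a I, is_partition p a I /\
                 ((2 * n)%:R : R)%:E * valV R (coeffs x a I)
                 + ((c_of p a I * u_of p a)%:R : R)%:E
                 - (eps * ratr (wnorm a))%:E
 = v].

(* Main.v *)
Require Import Defs.
From HB Require Import structures.
From mathcomp Require Import all_boot all_order all_algebra.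
From mathcomp Require Import classical_sets reals constructive_ereal ereal.
From mathcomp Require Import lra.
Import Order.TTheory GRing.Theory Num.Theory.
Local Open Scope ring_scope.
Local Open Scope ereal_scope.

Section Aux.
Variable R : realType.

Lemma inf_lb (S : set (\bar R)) : ereal_inf S != -oo ->
  exists C : R, forall y, S y -> C%:E <= y.
Proof.
case E: (ereal_inf S) => [r| |] // _.
- by exists r => y Sy; rewrite -E; exact: ereal_inf_lbound.
- exists 0%R => y Sy; move/ereal_inf_pinfty: E => /(_ y Sy) ->; exact: leey.
Qed.

Lemma lb_inf (S : set (\bar R)) (C : R) : (forall y, S y -> C%:E <= y) ->
  ereal_inf S != -oo.
Proof.
move=> H; have : C%:E <= ereal_inf S by apply: le_ereal_inf_tmp.
by case: (ereal_inf S).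
Qed.

Lemma valV_ge0 (k : nzRingType) (eta : witt k) : 0 <= valV R eta.
Proof.
apply: ereal_sup_ubound; exists 0%N => //.
Qed.

Lemma dir1 (v : \bar R) (u cu m : nat) (A C : R) : 0 <= v -> (u <= cu)%N ->
  (0 < m)%N ->
  C%:E <= v + (u%:R : R)%:E - A%:E ->
  C%:E <= (m%:R : R)%:E * v + (cu%:R : R)%:E - A%:E.
Proof.
move=> v0 ucu m0; case: v v0 => [r| |] //.
- rewrite !lee_fin => r0 H.
  have hm : (1 <= m%:R :> R)%R by rewrite ler1n.
  have hu : (u%:R <= cu%:R :> R)%R by rewrite ler_nat.
  nra.
- move=> _ _; rewrite gt0_muley ?lte_fin ?ltr0n //.
  by rewrite !addye // leey.
Qed.

Lemma dir2 (v : \bar R) (u cu m : nat) (e W C : R) : 0 <= v ->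
  (cu <= m * u)%N -> (0 < m)%N ->
  C%:E <= (m%:R : R)%:E * v + (cu%:R : R)%:E - (e * W)%:E ->
  (C / m%:R)%:E <= v + (u%:R : R)%:E - (e / m%:R * W)%:E.
Proof.
move=> v0 cum m0; case: v v0 => [r| |] //.
- rewrite !lee_fin => r0 H.
  have hm : (0 < m%:R :> R)%R by rewrite ltr0n.
  have hu : (cu%:R <= m%:R * u%:R :> R)%R by rewrite -natrM ler_nat.

  rewrite ler_pdivrMr //.
  have -> : (e / m%:R * W = (e * W) / m%:R)%R by rewrite mulrAC.
  rewrite mulrBl divfK ?gt_eqF //; nra.
- by move=> _ _; rewrite !addye // leey.
Qed.

End Aux.

Lemma u_le_cu (p n : nat) (a : weightT n) (I : {set 'I_n}) :
  (u_of p a <= c_of p a I * u_of p a)%N.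
Proof.
rewrite /c_of; case: ifP => [/eqP H0|_]; last by rewrite mulSn leq_addr.
case: (posnP #|I|) => [/eqP|pos]; last by rewrite leq_pmull.
rewrite cards_eq0 => /eqP EI; subst I.
have Hs : supp a = finset.set0.
  apply/setP => i; move/setP: H0 => /(_ i).
  have Hf : [forall j in (finset.set0 : {set 'I_n}), prec_eq p a i j && (i != j)].
    by apply/forall_inP => j; rewrite inE.
  by rewrite /I0 inE Hf andbT => ->.
by rewrite /u_of Hs big_set0.
Qed.

Lemma c_le (p n : nat) (a : weightT n) (I : {set 'I_n}) : (c_of p a I <= n.+1)%N.
Proof.
have := max_card I; rewrite card_ord => h.
by rewrite /c_of; case: ifP => _ //; apply: leqW.
Qed.

Theorem mainTheorem2 (R : realType) (p : nat) (k : comNzRingType) (n : nat)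
    (x : WOmega p k n) :
  prime p -> p \in [pchar k] ->
  (exists eps : R, (0 < eps)%R /\ gamma_eps eps x != -oo) <->
  (exists eps' : R, (0 < eps')%R /\ zeta_eps eps' x != -oo).
Proof.
move=> _ _.
case: (posnP n) => [n0|npos].
  subst n.
  have hw : forall a : weightT 0, wnorm a = 0%R by move=> a; rewrite /wnorm big_ord0.
  have hu : forall a : weightT 0, u_of p a = 0%N.
    by move=> a; rewrite /u_of big1 // => -[].
  split=> _; [exists 1%R; split=> //; apply: (@lb_inf _ _ 0%R) |
              exists 1%R; split=> //; apply: (@lb_inf _ _ 0%R)];
    move=> y [a [I [_ <-]]]; rewrite hw hu ?muln0.
  1,2: rewrite (rmorph0 (@ratr R)) mulr0.
  - have -> : (0%:E : \bar R) * valV R (coeffs x a I) = 0 := mul0e _.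
    by rewrite add0e sube0 lexx.
  - by rewrite adde0 sube0; exact: valV_ge0.
split.
- move=> [eps [eps0 /inf_lb [C HC]]]; exists eps; split => //.
  apply: (@lb_inf _ _ C) => y [a [I [hp <-]]].
  apply: dir1; [exact: valV_ge0 | exact: u_le_cu | by rewrite muln_gt0 npos |].
  apply: HC; exists a, I; split; [exact: hp | reflexivity].
- move=> [eps [eps0 /inf_lb [C HC]]]; exists (eps / (2 * n)%:R)%R; split.
    by rewrite divr_gt0 // ltr0n muln_gt0 npos.
  apply: (@lb_inf _ _ (C / (2 * n)%:R)%R) => y [a [I [hp <-]]].
  apply: (@dir2 R _ (u_of p a) (c_of p a I * u_of p a)%N); [exact: valV_ge0 | | by rewrite muln_gt0 npos |].
    rewrite leq_mul2r; apply/orP; right.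
    by apply: (leq_trans (c_le p n a I)); rewrite mul2n -addnn -addn1 leq_add2l.
  apply: HC; exists a, I; split; [exact: hp | reflexivity].
Qed.
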